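(* Let $\mathbb{F}$ be a finite field with $q$ elements, $q$ odd, and let $f\in\mathbb{F}[X]$ be a polynomial of degree $3$. If $q>9$, then there exists $x\in\mathbb{F}$ such that $f(x)\neq 0$ and $f(x)$ is not a square in $\mathbb{F}$. *)

(* Defs.v *)
From mathcomp Require Import all_boot all_algebra all_field.

(* Main.v *)
Require Import Defs.
From mathcomp Require Import all_boot all_algebra all_field.
From mathcomp Require Import all_fingroup all_solvable.
From mathcomp Require Import all_boot all_algebra all_field.
From mathcomp Require Import zify ring.
Import GRing.Theory.
Local Open Scope ring_scope.

Lemma cardF0 (F : finFieldType) : (#|F|%:R : F) = 0.
Proof.
have := @expg_cardG F [set: F] (1%R : F) (in_setT _).
rewrite cardsT. move=> h. exact: h.
Qed.

Theorem mainTheorem11 (F : finFieldType) (f : {poly F}) :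
  odd #|F| -> (9 < #|F|)%N -> size f = 4%N ->
  exists x : F, f.[x] != 0 /\ ~~ [exists y : F, y ^+ 2 == f.[x]].
Proof.
move=> oddQ Q9 sf.
have hk : #|F| = (#|F|./2).*2.+1 by rewrite -{1}(odd_double_half #|F|) oddQ.
set k := #|F|./2 in hk; clearbody k.
case: (boolP [exists x, (f.[x] != 0) && ~~ [exists y, y ^+ 2 == f.[x]]]) =>
  [/fintype.existsP [x /andP[h1 h2]] | /fintype.existsPn Hn]; first by exists x; split.
exfalso.
set Z : {poly F} := 'X^#|F| - 'X.
set G : {poly F} := f ^+ k.+1 - f.
have rootG : forall x, G.[x] = 0.
  move=> x; rewrite /G hornerD hornerN horner_exp.
  have := Hn x; rewrite negb_and !negbK => /orP [/eqP -> | /fintype.existsP [y /eqP hy]].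
    by rewrite expr0n subr0.
  rewrite -hy -exprM.
  have -> : (2 * k.+1 = #|F|.+1)%N by rewrite hk; lia.
  by rewrite exprS expf_card subrr.
have [H eGH] : exists H, G = H * Z.
  have hall : all (root G) (enum F) by apply/allP => x _; apply/rootP.
  have hu : uniq_roots (enum F) by rewrite uniq_rootsE enum_uniq.
  have [H eH] := uniq_roots_prod_XsubC hall hu.
  exists H; rewrite eH /Z finField_genPoly; congr (_ * _).
  by rewrite big_enum.
have k5 : (4 < k)%N by lia.
have f0 : f != 0 by rewrite -size_poly_eq0 sf.
have sZ : size Z = #|F|.+1.
  rewrite /Z size_addl ?size_polyXn // size_polyN size_polyX; lia.
have sG : size G = (3 * k.+1).+1%N.
  have sfk : size (f ^+ k.+1) = (3 * k.+1).+1%N.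
    have := size_exp f k.+1; rewrite sf /=.
    have : size (f ^+ k.+1) != 0%N by rewrite size_poly_eq0 expf_neq0.
    by case: (size (f ^+ k.+1)) => // n _ /= ->.
  rewrite /G size_addl sfk // size_polyN sf; lia.
have H0 : H != 0 by apply/eqP => H0; move: sG; rewrite eGH H0 mul0r size_poly0.
have Z0 : Z != 0 by rewrite -size_poly_eq0 sZ.
have sH : size H = k.+3.
  have := sG; rewrite eGH size_mul // sZ addnS /=.
  rewrite hk; move: (size H) => n h. lia.
have dZ : Z^`() = -1.
  rewrite /Z derivB derivXn derivX -mulr_natr -polyC_natr cardF0 mulr0 sub0r //.
have dG : G^`() = f^`() * f ^+ k *+ k.+1 - f^`() by rewrite /G derivB deriv_exp.
have dG2 : G^`() = H^`() * Z - H by rewrite eGH derivM dZ mulrN1 addrC.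
have key : Z * (k.+1%:R * f^`() * H - f * H^`()) = - (f * (H + k%:R * f^`())).
  apply/eqP; rewrite -subr_eq0 opprK.
  have e1 := dG; rewrite dG2 in e1.
  have e2 := eGH; rewrite /G exprS in e2.
  move: e1 e2; rewrite -mulr_natr.
  set fp := f^`(); set Hp := H^`(); set P := f ^+ k => e1 e2.
  have -> : Z * (k.+1%:R * fp * H - f * Hp) + f * (H + k%:R * fp)
     = f * ((fp * P * k.+1%:R - fp) - (Hp * Z - H)) - k.+1%:R * fp * ((f * P - f) - H * Z).
    rewrite -natr1; ring.
  by rewrite e1 e2 !subrr mulr0 mulr0 subrr.
have sfp : (size (deriv f) <= 3)%N by have := lt_size_deriv f0; rewrite sf.
have sR : (size (f * (H + k%:R * deriv f))%R <= k + 6)%N.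
  apply: leq_trans (size_mul_leq _ _) _; rewrite sf.
  have : (size (H + k%:R * deriv f)%R <= k.+3)%N.
    apply: leq_trans (size_add _ _) _; rewrite geq_max sH leqnn /=.
    rewrite -polyC_natr mul_polyC; apply: leq_trans (size_scale_leq _ _) (leq_trans sfp _).
    by [].
  lia.
have [K0|K0] := eqVneq (k.+1%:R * f^`() * H - f * H^`()) 0.
  move: key; rewrite K0 mulr0 => /esym /eqP; rewrite oppr_eq0 mulf_eq0 (negbTE f0) /=.
  rewrite addr_eq0 => /eqP eH.
  have : (size H <= 3)%N.
    rewrite eH size_polyN -polyC_natr mul_polyC.
    by apply: leq_trans (size_scale_leq _ _) _.
  rewrite sH; lia.
have E := congr1 (fun p : {poly F} => size p) key.
rewrite /= size_polyN size_mul // sZ addSn /= in E.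
have : size (k.+1%:R * f^`() * H - f * H^`()) != 0%N by rewrite size_poly_eq0.
move: E sR; rewrite hk.
move: (size (k.+1%:R * f^`() * H - f * H^`())) (size (f * (H + k%:R * f^`()))) => a b.
lia.
Qed.
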